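(* Consider the ISQA framework described in the context for $\min_x F(x)=f(x)+\Psi(x)$, run with the stopping condition $\|r^t\|\le\epsilon_t$, and assume there are $M\ge m>0$ with $M I\succeq H_t\succeq mI$ for all $t$. Let $x^*$ satisfy $$0\in\operatorname{relint}\big(\partial F(x^* )\big)=\nabla f(x^* )+\operatorname{relint}\big(\partial\Psi(x^* )\big),$$ with $\Psi$ partly smooth at $x^*$ relative to some manifold $\mathcal{M}$, and assume $f$ is $L$-smooth (gradient $L$-Lipschitz) in a neighborhood of $x^*$ for some $L>0$. Then there exist $\epsilon,\delta>0$ such that, for any iteration $t$, if $\|x^t-x^*\|\le\delta$, $\epsilon_t\le\epsilon$ and $\alpha_t=1$, then $x^{t+1}\in\mathcal{M}$.
   Context: Standing setting: $\mathcal{H}$ is a Euclidean space; $f:\mathcal{H}\to\mathbb{R}$ is continuously differentiable with Lipschitz gradient; $\Psi:\mathcal{H}\to(-\infty,\infty]$ is convex, proper, lower semicontinuous; $F=f+\Psi$ has a nonempty solution set. $\partial F(x)=\nabla f(x)+\partial\Psi(x)$; $\operatorname{relint}$ is relative interior. ISQA framework: given $x^0\in\mathcal{H}$ and $\gamma,\beta\in(0,1)$, for $t=0,1,\dots$: choose a self-adjoint positive semidefinite linear operator $H_t$ on $\mathcal{H}$ and $\epsilon_t\ge0$; let $Q_t(p):=\langle\nabla f(x^t),p\rangle+\tfrac12\langle p,H_tp\rangle+\Psi(x^t+p)-\Psi(x^t)$; compute $p^t$ with $\|r^t\|\le\epsilon_t$, where $r^t$ is the minimum-norm element of $\partial_pQ_t(p^t)$;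 let $\alpha_t$ be the largest element of $\{1,\beta,\beta^2,\dots\}$ with $F(x^t+\alpha_tp^t)\le F(x^t)+\gamma\alpha_tQ_t(p^t)$; set $x^{t+1}=x^t+\alpha_tp^t$. Manifolds and partial smoothness: $\mathcal{M}$ is a $p$-dimensional $\mathcal{C}^k$ manifold around $x$ if near $x$ it is the zero set of a $\mathcal{C}^k$ map $\Phi:\mathcal{H}\to\mathbb{R}^{\dim\mathcal{H}-p}$ with surjective derivative at $x$. $\Psi$ is partly smooth at $x^*$ relative to $\mathcal{M}\ni x^*$ if $\partial\Psi(x^* )\ne\emptyset$ and (i) near $x^*$, $\mathcal{M}$ is a $\mathcal{C}^2$ manifold and $\Psi|_{\mathcal{M}}$ is $\mathcal{C}^2$; (ii) the affine span of $\partial\Psi(x^* )$ is a translate of the normal space to $\mathcal{M}$ at $x^*$; (iii) $\partial\Psi$ is continuous at $x^*$ relative to $\mathcal{M}$; (iv) $\Psi$ is regular at points of $\mathcal{M}$ near $x^*$ with nonempty subdifferential. *)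

(* Defs.v *)
From HB Require Import structures.
From mathcomp Require Import all_boot all_order all_algebra.
From mathcomp Require Import boolp classical_sets reals constructive_ereal.
Set Implicit Arguments. Unset Strict Implicit. Unset Printing Implicit Defensive.
Import Order.TTheory GRing.Theory Num.Theory.
Local Open Scope ring_scope.
Local Open Scope classical_set_scope.

Section Defs.
Variable R : realType.

Definition dotv m (u v : 'rV[R]_m) : R := \sum_(i < m) u 0 i * v 0 i.
Definition enorm m (u : 'rV[R]_m) : R := Num.sqrt (dotv u u).

Definition seq_lim m (u : nat -> 'rV[R]_m) (l : 'rV[R]_m) : Prop :=
  forall e : R, 0 < e -> exists N : nat, forall k, (N <= k)%N -> enorm (u k - l) < e.

Definition open_set m (U : set 'rV[R]_m) : Prop :=
  forall x, U x -> exists r : R, 0 < r /\ forall y, enorm (y - x) < r -> U y.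

Definition closed_set m (C : set 'rV[R]_m) : Prop :=
  forall (u : nat -> 'rV[R]_m) l, (forall k, C (u k)) -> seq_lim u l -> C l.

Definition has_deriv m k (F : 'rV[R]_m -> 'rV[R]_k) (x : 'rV[R]_m) (D : 'M[R]_(m, k)) :=
  forall e : R, 0 < e -> exists d : R, 0 < d /\
    forall h, enorm h < d -> enorm (F (x + h) - F x - h *m D) <= e * enorm h.

Definition continuous_on m k (G : 'rV[R]_m -> 'rV[R]_k) (U : set 'rV[R]_m) :=
  forall x, U x -> forall e : R, 0 < e -> exists d : R, 0 < d /\
    forall y, U y -> enorm (y - x) < d -> enorm (G y - G x) < e.

Definition C1_on m k (F : 'rV[R]_m -> 'rV[R]_k) (U : set 'rV[R]_m) :=
  exists DF : 'rV[R]_m -> 'M[R]_(m, k),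
    (forall x, U x -> has_deriv F x (DF x)) /\ continuous_on (fun x => mxvec (DF x)) U.

Definition C2_on m k (F : 'rV[R]_m -> 'rV[R]_k) (U : set 'rV[R]_m) :=
  exists DF : 'rV[R]_m -> 'M[R]_(m, k),
    (forall x, U x -> has_deriv F x (DF x)) /\ C1_on (fun x => mxvec (DF x)) U.

Definition has_gradient n (f : 'rV[R]_n -> R) (g : 'rV[R]_n -> 'rV[R]_n) :=
  forall x (e : R), 0 < e -> exists d : R, 0 < d /\
    forall h, enorm h < d -> `| f (x + h) - f x - dotv (g x) h | <= e * enorm h.

Definition manifold_chart n (M : set 'rV[R]_n) (x : 'rV[R]_n) k (U : set 'rV[R]_n)
    (Phi : 'rV[R]_n -> 'rV[R]_k) (DPhi : 'rV[R]_n -> 'M[R]_(n, k)) :=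
  [/\ open_set U, U x, C2_on Phi U,
      (forall y, U y -> has_deriv Phi y (DPhi y)) &
      (forall v : 'rV[R]_k, exists h, h *m DPhi x = v)] /\
  (forall y, U y -> (M y <-> Phi y = 0)).

Definition C2_manifold_around n (M : set 'rV[R]_n) x :=
  exists k U (Phi : 'rV[R]_n -> 'rV[R]_k) DPhi, manifold_chart M x U Phi DPhi.

(* normal space at x = orthogonal complement of the tangent space ker DPhi(x) *)
Definition normal_space n (M : set 'rV[R]_n) x : set 'rV[R]_n :=
  [set v | exists k U (Phi : 'rV[R]_n -> 'rV[R]_k) DPhi,
     manifold_chart M x U Phi DPhi /\ forall h, h *m DPhi x = 0 -> dotv v h = 0].

Definition convex_fun n (Psi : 'rV[R]_n -> \bar R) :=
  forall (x y : 'rV[R]_n) (t : R), 0 < t < 1 ->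
    (Psi ((t *: x + (1 - t) *: y)%R) <= (t%:E * Psi x)%E + ((1 - t)%:E * Psi y)%E)%E.

Definition proper_fun n (Psi : 'rV[R]_n -> \bar R) :=
  (forall x, Psi x != -oo%E) /\ exists x, Psi x \is a fin_num.

Definition lsc_fun n (Psi : 'rV[R]_n -> \bar R) :=
  forall x (a : R), (a%:E < Psi x)%E -> exists d : R, 0 < d /\
    forall y, enorm (y - x) < d -> (a%:E < Psi y)%E.

Definition subdiff n (Psi : 'rV[R]_n -> \bar R) (x : 'rV[R]_n) : set 'rV[R]_n :=
  [set g | Psi x \is a fin_num /\
     forall y, (Psi x + (dotv g (y - x))%:E <= Psi y)%E].

Definition aff_span n (S : set 'rV[R]_n) : set 'rV[R]_n :=
  [set y | exists (m : nat) (lam : 'I_m -> R) (g : 'I_m -> 'rV[R]_n),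
     [/\ forall i, S (g i), \sum_(i < m) lam i = 1 & y = \sum_(i < m) lam i *: g i]].

Definition relint n (S : set 'rV[R]_n) : set 'rV[R]_n :=
  [set g | S g /\ exists e : R, 0 < e /\
     forall y, aff_span S y -> enorm (y - g) < e -> S y].

Definition minnorm n (S : set 'rV[R]_n) (r : 'rV[R]_n) :=
  S r /\ forall s, S s -> enorm r <= enorm s.

Definition epigraph n (Psi : 'rV[R]_n -> \bar R) : set 'rV[R]_(n + 1) :=
  [set z | (Psi (lsubmx z) <= ((rsubmx z) 0 0)%:E)%E].

Definition frechet_normal m (C : set 'rV[R]_m) (z : 'rV[R]_m) : set 'rV[R]_m :=
  [set v | forall e : R, 0 < e -> exists d : R, 0 < d /\
     forall z', C z' -> enorm (z' - z) < d -> dotv v (z' - z) <= e * enorm (z' - z)].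

Definition limiting_normal m (C : set 'rV[R]_m) (z : 'rV[R]_m) : set 'rV[R]_m :=
  [set v | exists (zk vk : nat -> 'rV[R]_m),
     [/\ forall k, C (zk k), seq_lim zk z,
         forall k, frechet_normal C (zk k) (vk k) & seq_lim vk v]].

Definition locally_closed m (C : set 'rV[R]_m) (z : 'rV[R]_m) :=
  exists d : R, 0 < d /\ closed_set (C `&` [set y | enorm (y - z) <= d]).

Definition clarke_regular_set m (C : set 'rV[R]_m) (z : 'rV[R]_m) :=
  [/\ C z, locally_closed C z &
      forall v, limiting_normal C z v -> frechet_normal C z v].

Definition regular_at n (Psi : 'rV[R]_n -> \bar R) (x : 'rV[R]_n) :=
  Psi x \is a fin_num /\
  clarke_regular_set (epigraph Psi) (row_mx x (const_mx (fine (Psi x)) : 'rV[R]_1)).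

(* continuity of the set-valued map subdiff Psi at xs relative to M
   (inner and outer semicontinuity) *)
Definition subdiff_continuous_rel n (Psi : 'rV[R]_n -> \bar R) (M : set 'rV[R]_n) xs :=
  (forall g, subdiff Psi xs g -> forall e : R, 0 < e -> exists d : R, 0 < d /\
     forall y, M y -> enorm (y - xs) < d ->
       exists g', subdiff Psi y g' /\ enorm (g' - g) < e) /\
  (forall (y g : nat -> 'rV[R]_n) g0, (forall k, M (y k)) -> seq_lim y xs ->
     (forall k, subdiff Psi (y k) (g k)) -> seq_lim g g0 -> subdiff Psi xs g0).

Definition partly_smooth n (Psi : 'rV[R]_n -> \bar R) (xs : 'rV[R]_n) (M : set 'rV[R]_n) :=
  M xs /\
  [/\ (exists g, subdiff Psi xs g),
      C2_manifold_around M xs /\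
        (exists (U : set 'rV[R]_n) (g : 'rV[R]_n -> 'rV[R]_1),
           [/\ open_set U, U xs, C2_on g U &
               forall y, U y -> M y -> Psi y = (g y 0 0)%:E]),
      (exists s, forall y, aff_span (subdiff Psi xs) y <-> normal_space M xs (y - s)),
      subdiff_continuous_rel Psi M xs &
      exists d : R, 0 < d /\ forall y, M y -> enorm (y - xs) < d ->
        regular_at Psi y /\ exists g, subdiff Psi y g].

Definition Fobj n (f : 'rV[R]_n -> R) (Psi : 'rV[R]_n -> \bar R) x : \bar R :=
  ((f x)%:E + Psi x)%E.

Definition subdiffF n (gradf : 'rV[R]_n -> 'rV[R]_n) (Psi : 'rV[R]_n -> \bar R) x
  : set 'rV[R]_n := [set v | exists u, subdiff Psi x u /\ v = gradf x + u].

(* Q_t(p) with gx = grad f(x^t), Hm = H_t, xt = x^t *)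
Definition Qmodel n (gx : 'rV[R]_n) (Hm : 'M[R]_n) (Psi : 'rV[R]_n -> \bar R)
    (xt p : 'rV[R]_n) : \bar R :=
  ((dotv gx p + 2^-1 * dotv p (p *m Hm))%:E + Psi ((xt + p)%R) - Psi xt)%E.

Definition armijo n (f : 'rV[R]_n -> R) (gradf : 'rV[R]_n -> 'rV[R]_n)
    (Psi : 'rV[R]_n -> \bar R) (gamma : R) (Hm : 'M[R]_n) (xt p : 'rV[R]_n) (a : R) :=
  (Fobj f Psi ((xt + a *: p)%R) <=
     Fobj f Psi xt + (gamma * a)%:E * Qmodel (gradf xt) Hm Psi xt p)%E.

Definition isqa_run n (f : 'rV[R]_n -> R) (gradf : 'rV[R]_n -> 'rV[R]_n)
    (Psi : 'rV[R]_n -> \bar R) (gamma beta : R) (x : nat -> 'rV[R]_n)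
    (Hs : nat -> 'M[R]_n) (eps : nat -> R) (p r : nat -> 'rV[R]_n) (alpha : nat -> R) :=
  [/\ 0 < gamma < 1, 0 < beta < 1 &
      (forall t, 0 <= eps t)] /\
  [/\ (forall t, (Hs t)^T = Hs t /\ forall v, 0 <= dotv v (v *m Hs t)),
      (forall t, minnorm (subdiff (Qmodel (gradf (x t)) (Hs t) Psi (x t)) (p t)) (r t)
                 /\ enorm (r t) <= eps t),
      (forall t, [/\ exists k : nat, alpha t = beta ^+ k,
                     armijo f gradf Psi gamma (Hs t) (x t) (p t) (alpha t) &
                     forall k : nat, armijo f gradf Psi gamma (Hs t) (x t) (p t) (beta ^+ k) ->
                        beta ^+ k <= alpha t]) &
      (forall t, x t.+1 = x t + alpha t *: p t)].

End Defs.

(* Main.v *)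
Require Import Defs.
From HB Require Import structures.
From mathcomp Require Import all_boot all_order all_algebra.
From mathcomp Require Import boolp classical_sets reals constructive_ereal.
From mathcomp Require Import topology normedtype derive matrix_normedtype.
From mathcomp Require Import ring lra.
Import Order.TTheory GRing.Theory Num.Theory.
Import numFieldTopology.Exports numFieldNormedType.Exports.
Set Implicit Arguments. Unset Strict Implicit. Unset Printing Implicit Defensive.
Local Open Scope ring_scope.
Local Open Scope classical_set_scope.
Import Defs.

Section Vec.
Variable R : realType.

Lemma dotvE m (u v : 'rV[R]_m) : dotv u v = (u *m v^T) 0 0.
Proof. by rewrite /dotv !mxE; apply: eq_bigr => i _; rewrite mxE. Qed.

Lemma dotvC m (u v : 'rV[R]_m) : dotv u v = dotv v u.
Proof. by rewrite /dotv; apply: eq_bigr => i _; rewrite mulrC. Qed.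

Lemma dotvDl m (u w v : 'rV[R]_m) : dotv (u + w) v = dotv u v + dotv w v.
Proof. by rewrite /dotv -big_split; apply: eq_bigr => i _; rewrite mxE mulrDl. Qed.

Lemma dotvDr m (v u w : 'rV[R]_m) : dotv v (u + w) = dotv v u + dotv v w.
Proof. by rewrite dotvC dotvDl !(dotvC v). Qed.

Lemma dotvZl m (a : R) (u v : 'rV[R]_m) : dotv (a *: u) v = a * dotv u v.
Proof. by rewrite /dotv mulr_sumr; apply: eq_bigr => i _; rewrite mxE mulrA. Qed.

Lemma dotvZr m (a : R) (u v : 'rV[R]_m) : dotv v (a *: u) = a * dotv v u.
Proof. by rewrite dotvC dotvZl dotvC. Qed.

Lemma dotvNl m (u v : 'rV[R]_m) : dotv (- u) v = - dotv u v.
Proof. by rewrite -scaleN1r dotvZl mulN1r. Qed.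

Lemma dotvNr m (u v : 'rV[R]_m) : dotv v (- u) = - dotv v u.
Proof. by rewrite dotvC dotvNl dotvC. Qed.

Lemma dotvBl m (u w v : 'rV[R]_m) : dotv (u - w) v = dotv u v - dotv w v.
Proof. by rewrite dotvDl dotvNl. Qed.

Lemma dotvBr m (v u w : 'rV[R]_m) : dotv v (u - w) = dotv v u - dotv v w.
Proof. by rewrite dotvDr dotvNr. Qed.

Lemma dotv0l m (v : 'rV[R]_m) : dotv 0 v = 0.
Proof. by rewrite /dotv big1 // => i _; rewrite mxE mul0r. Qed.

Lemma dotv0r m (v : 'rV[R]_m) : dotv v 0 = 0.
Proof. by rewrite dotvC dotv0l. Qed.

Lemma dotvv_ge0 m (u : 'rV[R]_m) : 0 <= dotv u u.
Proof. by rewrite /dotv sumr_ge0 // => i _; rewrite -expr2 sqr_ge0. Qed.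

Lemma dotvv_eq0 m (u : 'rV[R]_m) : dotv u u = 0 -> u = 0.
Proof.
move=> H; apply/rowP => i; rewrite mxE.
have : (u 0 i) ^+ 2 <= 0.
  rewrite -H /dotv (bigD1 i) //= expr2 lerDl sumr_ge0 // => j _.
  by rewrite -expr2 sqr_ge0.
by rewrite le_eqVlt ltNge sqr_ge0 orbF sqrf_eq0 => /eqP.
Qed.

Lemma enorm_ge0 m (u : 'rV[R]_m) : 0 <= enorm u.
Proof. exact: sqrtr_ge0. Qed.

Lemma enorm_sqr m (u : 'rV[R]_m) : enorm u ^+ 2 = dotv u u.
Proof. by rewrite /enorm sqr_sqrtr // dotvv_ge0. Qed.

Lemma enorm0 m : enorm (0 : 'rV[R]_m) = 0.
Proof. by rewrite /enorm dotv0l sqrtr0. Qed.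

Lemma enorm_eq0 m (u : 'rV[R]_m) : enorm u = 0 -> u = 0.
Proof. by move=> H; apply: dotvv_eq0; rewrite -enorm_sqr H expr0n. Qed.

Lemma discr (a b c : R) : 0 <= c ->
  (forall t : R, 0 <= a - 2 * t * b + t ^+ 2 * c) -> b ^+ 2 <= a * c.
Proof.
move=> c0 H.
case: (ltP 0 c) => [cp|c0'].
  have := H (b / c).
  have -> : a - 2 * (b / c) * b + (b / c) ^+ 2 * c = (a * c - b ^+ 2) / c.
    by field; rewrite gt_eqF.
  by rewrite pmulr_lge0 ?invr_gt0 // subr_ge0.
have c00 : c = 0 by apply/eqP; rewrite eq_le c0' c0.
case: (eqVneq b 0) => [->|bn0]; first by rewrite expr0n /= c00 mulr0.
have := H ((a + 1) / (2 * b)).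
have -> : a - 2 * ((a + 1) / (2 * b)) * b + ((a + 1) / (2 * b)) ^+ 2 * c = - 1.
  rewrite c00 mulr0 addr0; field; by rewrite bn0.
by rewrite oppr_ge0 ler10.
Qed.

Lemma dotv_sq_le m (u v : 'rV[R]_m) : dotv u v ^+ 2 <= dotv u u * dotv v v.
Proof.
apply: discr; first exact: dotvv_ge0.
move=> t; have := dotvv_ge0 (u - t *: v).
rewrite !dotvBl !dotvBr !dotvZl !dotvZr (dotvC v u).
by rewrite (_ : _ - _ = dotv u u - 2 * t * dotv u v + t ^+ 2 * dotv v v) //; ring.
Qed.

Lemma sqr_le_nonneg (x y : R) : 0 <= y -> x ^+ 2 <= y ^+ 2 -> x <= y.
Proof. move=> y0; rewrite -(ler_sqrt (x ^+ 2) (sqr_ge0 y)) !sqrtr_sqr (ger0_norm y0) => H; exact: le_trans (ler_norm _) H. Qed.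

Lemma dotv_le m (u v : 'rV[R]_m) : `|dotv u v| <= enorm u * enorm v.
Proof.
apply: sqr_le_nonneg; first by rewrite mulr_ge0 ?enorm_ge0.
by rewrite exprMn !enorm_sqr real_normK ?num_real // dotv_sq_le.
Qed.

Lemma dotv_le' m (u v : 'rV[R]_m) : dotv u v <= enorm u * enorm v.
Proof. exact: le_trans (ler_norm _) (dotv_le u v). Qed.

Lemma enormD m (u v : 'rV[R]_m) : enorm (u + v) <= enorm u + enorm v.
Proof.
apply: sqr_le_nonneg; first by rewrite addr_ge0 ?enorm_ge0.
rewrite enorm_sqr sqrrD !enorm_sqr dotvDl !dotvDr (dotvC v u).
have := dotv_le' u v; lra.
Qed.

Lemma enormZ m (a : R) (u : 'rV[R]_m) : enorm (a *: u) = `|a| * enorm u.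
Proof.
by rewrite /enorm dotvZl dotvZr mulrA -expr2 sqrtrM ?sqr_ge0 // sqrtr_sqr.
Qed.

Lemma enormN m (u : 'rV[R]_m) : enorm (- u) = enorm u.
Proof. by rewrite /enorm dotvNl dotvNr opprK. Qed.

Lemma enormB m (u v : 'rV[R]_m) : enorm (u - v) = enorm (v - u).
Proof. by rewrite -enormN opprB. Qed.

Lemma enormBle m (u v : 'rV[R]_m) : enorm (u - v) <= enorm u + enorm v.
Proof. by apply: le_trans (enormD _ _) _; rewrite enormN. Qed.

Lemma enorm_rev m (a b : 'rV[R]_m) : enorm a <= enorm (a - b) + enorm b.
Proof. by have := enormD (a - b) b; rewrite subrK. Qed.

Lemma single_le_sum k (F : 'I_k -> R) i : (forall j, 0 <= F j) -> F i <= \sum_j F j.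
Proof. by move=> H; rewrite (bigD1 i) //= lerDl sumr_ge0. Qed.

Lemma coord_le m (u : 'rV[R]_m) i : `|u 0 i| <= enorm u.
Proof.
apply: sqr_le_nonneg; first exact: enorm_ge0.
rewrite enorm_sqr real_normK ?num_real // /dotv expr2.
apply: (@single_le_sum m (fun j => u 0 j * u 0 j) i) => j.
by rewrite -expr2 sqr_ge0.
Qed.

Lemma enorm_le_sum m (u : 'rV[R]_m) : enorm u <= \sum_i `|u 0 i|.
Proof.
apply: sqr_le_nonneg; first by rewrite sumr_ge0.
rewrite enorm_sqr /dotv expr2 mulr_suml; apply: ler_sum => i _.
apply: (@le_trans _ _ (`|u 0 i| * `|u 0 i|)); first by rewrite -normrM ler_norm.
rewrite ler_wpM2l //; exact: (@single_le_sum m (fun j => `|u 0 j|) i).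
Qed.

Definition mnorm m k (M : 'M[R]_(m, k)) : R := \sum_j \sum_i `|M i j|.

Lemma mnorm_ge0 m k (M : 'M[R]_(m, k)) : 0 <= mnorm M.
Proof. by rewrite /mnorm sumr_ge0 // => j _; rewrite sumr_ge0. Qed.

Lemma enorm_mulmx m k (v : 'rV[R]_m) (M : 'M[R]_(m, k)) :
  enorm (v *m M) <= enorm v * mnorm M.
Proof.
apply: le_trans (enorm_le_sum _) _.
rewrite /mnorm mulr_sumr; apply: ler_sum => j _; rewrite mxE mulr_sumr.
apply: le_trans (ler_norm_sum _ _ _) _; apply: ler_sum => i _.
by rewrite normrM ler_wpM2r // coord_le.
Qed.

Lemma mnorm_tr m k (M : 'M[R]_(m, k)) : mnorm M^T = mnorm M.
Proof.
rewrite /mnorm exchange_big /=; apply: eq_bigr => i _; apply: eq_bigr => j _.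
by rewrite mxE.
Qed.

Lemma mnormN m k (M : 'M[R]_(m, k)) : mnorm (- M) = mnorm M.
Proof.
by rewrite /mnorm; apply: eq_bigr => i _; apply: eq_bigr => j _; rewrite mxE normrN.
Qed.

Lemma mnorm_mxvec m k (M : 'M[R]_(m, k)) : mnorm M <= (k * m)%:R * enorm (mxvec M).
Proof.
apply: (@le_trans _ _ (\sum_(j < k) \sum_(i < m) enorm (mxvec M))).
  by apply: ler_sum => j _; apply: ler_sum => i _; rewrite -mxvecE coord_le.
by rewrite !sumr_const !card_ord -mulrnA mulr_natl [(k * m)%N]mulnC.
Qed.

Lemma le0_eps (a c : R) : 0 <= c -> (forall e : R, 0 < e -> a <= e * c) -> a <= 0.
Proof.
move=> c0 H; rewrite leNgt; apply/negP => a0.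
have cp : 0 < c + 1 by lra.
have := H (a / (c + 1)) (divr_gt0 a0 cp).
have E : a / (c + 1) * (c + 1) = a by rewrite divfK // gt_eqF.
have bp : 0 < a / (c + 1) by rewrite divr_gt0.
move: E bp; set b := a / (c + 1) => E bp; nra.
Qed.

End Vec.

Section Deriv.
Variable R : realType.

Lemma minle_l (x y : R) : Order.min x y <= x.
Proof. by rewrite ge_min lexx. Qed.

Lemma minle_r (x y : R) : Order.min x y <= y.
Proof. by rewrite ge_min lexx orbT. Qed.

Lemma frac_lt (d x : R) : 0 < d -> 0 <= x -> d / (x + 1) * x < d.
Proof.
move=> d0 x0; have x1 : 0 < x + 1 by lra.
rewrite mulrAC ltr_pdivrMr //; nra.
Qed.

Lemma sum_le_const k (F : 'I_k -> R) (c : R) : (forall i, F i <= c) -> \sum_i F i <= k%:R * c.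
Proof.
move=> H; apply: le_trans (_ : _ <= \sum_(i < k) c) _; first by apply: ler_sum => i _.
by rewrite sumr_const card_ord mulr_natl.
Qed.

Lemma enorm_box k (l : 'rV[R]_k) (c : R) : (forall i, `|l 0 i| <= c) -> enorm l <= k%:R * c.
Proof. by move=> H; apply: le_trans (enorm_le_sum _) (sum_le_const H). Qed.

Lemma enorm_dist m (a b : 'rV[R]_m) : `|enorm a - enorm b| <= enorm (a - b).
Proof.
rewrite ler_norml; apply/andP; split.
  by have := enorm_rev b a; rewrite enormB; lra.
by have := enorm_rev a b; lra.
Qed.

Lemma has_deriv_cont m k (F : 'rV[R]_m -> 'rV[R]_k) x D : has_deriv F x D ->
  forall e : R, 0 < e -> exists d : R, 0 < d /\ forall y, enorm (y - x) < d -> enorm (F y - F x) < e.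
Proof.
move=> HD e e0; have [d0 [d0p Hd0]] := HD 1 ltr01.
have cp : 0 < 1 + mnorm D by have := mnorm_ge0 D; lra.
exists (Order.min d0 (e / (1 + mnorm D))); split; first by rewrite lt_min d0p divr_gt0.
move=> y; rewrite lt_min => /andP [h1 h2].
have Ey : x + (y - x) = y by rewrite addrC subrK.
have := Hd0 _ h1; rewrite Ey mul1r => H.
have H3 := enorm_rev (F y - F x) ((y - x) *m D).
have H4 := enorm_mulmx (y - x) D.
have hc : enorm (y - x) * (1 + mnorm D) < e by rewrite -ltr_pdivlMr.
have := enorm_ge0 (y - x); have := mnorm_ge0 D; nra.
Qed.

Lemma has_deriv_uniq m k (F : 'rV[R]_m -> 'rV[R]_k) x D1 D2 :
  has_deriv F x D1 -> has_deriv F x D2 -> D1 = D2.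
Proof.
move=> H1 H2.
have key : forall w, enorm (w *m (D1 - D2)) = 0.
  move=> w; apply/eqP; rewrite eq_le enorm_ge0 andbT.
  apply: (@le0_eps _ _ (2 * enorm w)); first by rewrite mulr_ge0 ?enorm_ge0.
  move=> e e0; have [d1 [d1p Hd1]] := H1 e e0; have [d2 [d2p Hd2]] := H2 e e0.
  pose d := Order.min d1 d2.
  have dp : 0 < d by rewrite lt_min d1p d2p.
  pose s := d / (enorm w + 1).
  have sp : 0 < s by rewrite divr_gt0 // ltr_wpDl ?enorm_ge0.
  have hs : enorm (s *: w) < d by rewrite enormZ ger0_norm ?(ltW sp) // frac_lt ?enorm_ge0.
  have A1 := Hd1 (s *: w) (lt_le_trans hs (minle_l _ _)).
  have A2 := Hd2 (s *: w) (lt_le_trans hs (minle_r _ _)).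
  have E : (s *: w) *m (D1 - D2) = (F (x + s *: w) - F x - (s *: w) *m D2) - (F (x + s *: w) - F x - (s *: w) *m D1).
    by rewrite mulmxBr; apply/rowP => j; rewrite !mxE; ring.
  have := enormBle (F (x + s *: w) - F x - (s *: w) *m D2) (F (x + s *: w) - F x - (s *: w) *m D1).
  rewrite -E -scalemxAl !enormZ ger0_norm ?(ltW sp) //.
  have := enorm_ge0 w; have := enorm_ge0 (w *m (D1 - D2)).
  move: A1 A2; rewrite !enormZ ger0_norm ?(ltW sp) // => A1 A2 g1 g2 H.
  have : s * enorm (w *m (D1 - D2)) <= s * (e * (2 * enorm w)) by nra.
  by rewrite ler_pM2l.
apply/matrixP => i j; apply/eqP; rewrite -subr_eq0; apply/eqP.
have := enorm_eq0 (key (delta_mx 0 i)); rewrite -rowE => /rowP/(_ j).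
by rewrite !mxE.
Qed.

End Deriv.

Lemma ctest (R : realType) k (q : 'rV[R]_k -> R) (l : 'rV[R]_k) :
  (forall e : R, 0 < e ->
     exists d : R, 0 < d /\ forall mu : 'rV[R]_k, (forall i, `|mu 0 i - l 0 i| < d) -> `|q mu - q l| < e) ->
  {for l, continuous q}.
Proof.
move=> qc.
apply/(@cvgrPdist_lt _ _ _ _ (nbhs_filter l)) => e e0.
have [d [d0 Hd]] := qc e e0.
have : \forall mu \near l, forall i, `|(mu : 'rV[R]_k) 0 i - l 0 i| < d.
  apply/nbhs_ballP; exists d => //= mu B i.
  move: B; rewrite /ball /= => -[_ /(_ 0 i)]; rewrite /ball /= distrC //.
apply: filterS => mu /Hd; rewrite distrC //.
Qed.

Lemma box_min (R : realType) k (q : 'rV[R]_k -> R) (rho : R) : 0 <= rho ->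
  (forall l : 'rV[R]_k, (forall i, `|l 0 i| <= rho) -> forall e : R, 0 < e ->
     exists d : R, 0 < d /\ forall mu : 'rV[R]_k, (forall i, `|mu 0 i - l 0 i| < d) -> `|q mu - q l| < e) ->
  exists ls : 'rV[R]_k, (forall i, `|ls 0 i| <= rho) /\
     forall l : 'rV[R]_k, (forall i, `|l 0 i| <= rho) -> q ls <= q l.
Proof.
move=> rho0 qc.
pose A : set 'rV[R]_k := [set v : 'rV[R]_k | forall i, (fun _ : 'I_k => `[(- rho), rho]%classic) i (v ord0 i)].
have cA : compact A.
  by apply: (@rV_compact _ _ (fun=> `[(- rho), rho]%classic)) => _; exact: segment_compact.
have inA v : A v <-> (forall i, `|v 0 i| <= rho).
  rewrite /A /=; split=> H i; have := H i; rewrite in_itv /= ler_norml //.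
have A0 : A !=set0.
  by exists 0; apply/inA => i; rewrite mxE normr0.
have cq : {within A, continuous q}.
  apply: continuous_in_subspaceT => l /set_mem /inA lA.
  exact: ctest (qc l lA).
have [c /set_mem cA' cmin] := EVT_min_rV A0 cA cq.
exists c; split; first by apply/inA.
by move=> l /inA lA; apply: cmin; apply/mem_set.
Qed.

Section IFT.
Variable R : realType.

Lemma sq_le (x y : R) : 0 <= x -> x <= y -> x ^+ 2 <= y ^+ 2.
Proof. move=> x0 xy; nra. Qed.

Lemma fo_cond n k (Phi : 'rV[R]_n -> 'rV[R]_k) (z : 'rV[R]_n) (Dz : 'M[R]_(n, k))
    (At : 'M[R]_(k, n)) (r : R) :
  has_deriv Phi z Dz -> 0 < r ->
  (forall mu : 'rV[R]_k, enorm mu < r -> enorm (Phi z) <= enorm (Phi (z - mu *m At))) ->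
  Phi z *m (At *m Dz)^T = 0.
Proof.
move=> HD r0 Hmin.
set Ph := Phi z; set B := At *m Dz; set mu0 := Ph *m B^T.
have key : forall mu : 'rV[R]_k, dotv Ph (mu *m B) = dotv mu mu0.
  by move=> mu; rewrite (dotvC mu) !dotvE trmx_mul mulmxA.
pose t := mnorm At; have t0 : 0 <= t := mnorm_ge0 At.
pose md := mnorm Dz; have md0 : 0 <= md := mnorm_ge0 Dz.
pose P := enorm Ph; have P0 : 0 <= P := enorm_ge0 Ph.
pose nm := enorm mu0; have nm0 : 0 <= nm := enorm_ge0 mu0.
apply: dotvv_eq0; apply/eqP; rewrite eq_le dotvv_ge0 andbT.
apply: (@le0_eps _ _ (P * nm * t + 1)); first by have := mulr_ge0 (mulr_ge0 P0 nm0) t0; lra.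
move=> e e0; have [d [dp Hd]] := HD e e0.
pose X := nm * t * (md + e).
have X0 : 0 <= X by rewrite !mulr_ge0 //; lra.
pose s := Order.min (Order.min (r / (nm + 1)) (d / (nm * t + 1))) (2 * e / (X ^+ 2 + 1)).
have sp : 0 < s.
  have a1 : 0 < r / (nm + 1) by rewrite divr_gt0 //; lra.
  have a2 : 0 < d / (nm * t + 1) by rewrite divr_gt0 //; have := mulr_ge0 nm0 t0; lra.
  have a3 : 0 < 2 * e / (X ^+ 2 + 1) by rewrite divr_gt0 //; have := sqr_ge0 X; lra.
  by rewrite !lt_min a1 a2 a3.
have s1 : s <= r / (nm + 1) by apply: le_trans (minle_l _ _) (minle_l _ _).
have s2 : s <= d / (nm * t + 1) by apply: le_trans (minle_l _ _) (minle_r _ _).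
have s3 : s <= 2 * e / (X ^+ 2 + 1) by apply: minle_r.
have hmu : enorm (s *: mu0) < r.
  rewrite enormZ ger0_norm ?(ltW sp) //.
  apply: le_lt_trans (_ : r / (nm + 1) * nm < r); last exact: frac_lt.
  by rewrite ler_wpM2r.
pose h := - ((s *: mu0) *m At).
have hh : enorm h <= s * nm * t.
  rewrite /h enormN; apply: le_trans (enorm_mulmx _ _) _.
  by rewrite enormZ ger0_norm ?(ltW sp).
have hd : enorm h < d.
  apply: le_lt_trans hh _.
  apply: le_lt_trans (_ : d / (nm * t + 1) * (nm * t) < d); last by apply: frac_lt; rewrite ?mulr_ge0.
  by rewrite -mulrA ler_wpM2r ?mulr_ge0.
have HR := Hd h hd.
have Hm := Hmin _ hmu.
set Rv := Phi (z + h) - Ph - h *m Dz in HR.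
set W := h *m Dz + Rv.
have EP : Phi (z - (s *: mu0) *m At) = Ph + W.
  by rewrite /W /Rv /h; apply/rowP => j; rewrite !mxE; ring.
rewrite EP in Hm.
have F1 : dotv Ph Ph <= dotv Ph Ph + 2 * (- (s * dotv mu0 mu0) + dotv Ph Rv) + dotv W W.
  have := sq_le (enorm_ge0 _) Hm; rewrite !enorm_sqr -/Ph dotvDl (dotvDr Ph Ph W) (dotvDr W Ph W) (dotvC W Ph).
  have -> : dotv Ph W = - (s * dotv mu0 mu0) + dotv Ph Rv.
    by rewrite /W dotvDr /h mulNmx -!scalemxAl -mulmxA dotvNr dotvZr key.
  lra.
have F2 : dotv Ph Rv <= P * enorm Rv := dotv_le' _ _.
have F3 : enorm Rv <= e * enorm h := HR.
have F6 : enorm (h *m Dz) <= enorm h * md := enorm_mulmx _ _.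
have F5 : enorm W <= enorm (h *m Dz) + enorm Rv := enormD _ _.
have G3 : enorm (h *m Dz) + enorm Rv <= s * X.
  have : enorm h * (md + e) <= s * nm * t * (md + e) by rewrite ler_wpM2r //; lra.
  rewrite /X; have := enorm_ge0 h; nra.
have G4 : dotv W W <= (s * X) ^+ 2.
  by rewrite -enorm_sqr; apply: sq_le; [exact: enorm_ge0 | exact: le_trans F5 G3].
have G2 : P * enorm Rv <= P * (e * (s * nm * t)).
  by rewrite ler_wpM2l //; apply: le_trans F3 _; rewrite ler_wpM2l // ltW.
have F7 : s * X ^+ 2 <= 2 * e.
  apply: le_trans (_ : 2 * e / (X ^+ 2 + 1) * X ^+ 2 <= 2 * e).
    by rewrite ler_wpM2r ?sqr_ge0.
  by apply: ltW; apply: frac_lt; rewrite ?sqr_ge0 //; lra.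
have : s * (2 * dotv mu0 mu0) <= s * (2 * (e * (P * nm * t)) + s * X ^+ 2).
  have : 2 * (s * dotv mu0 mu0) <= 2 * (P * (e * (s * nm * t))) + (s * X) ^+ 2 by lra.
  by rewrite exprMn; lra.
rewrite ler_pM2l // => H.
have : 2 * dotv mu0 mu0 <= 2 * (e * (P * nm * t)) + 2 * e by lra.
lra.
Qed.

End IFT.

Section IFT2.
Variable R : realType.

Lemma zero_near n k (Phi : 'rV[R]_n -> 'rV[R]_k) (D : 'rV[R]_n -> 'M[R]_(n, k))
    (U : set 'rV[R]_n) (xs : 'rV[R]_n) :
  open_set U -> U xs -> Phi xs = 0 ->
  (forall y, U y -> has_deriv Phi y (D y)) ->
  (forall e : R, 0 < e -> exists d : R, 0 < d /\ forall y, enorm (y - xs) < d -> mnorm (D y - D xs) < e) ->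
  (forall v : 'rV[R]_k, exists h, h *m D xs = v) ->
  forall eta : R, 0 < eta -> exists del : R, 0 < del /\ forall y, enorm (y - xs) < del ->
    exists lam : 'rV[R]_k, U (y - lam *m (D xs)^T) /\ Phi (y - lam *m (D xs)^T) = 0 /\
       enorm (y - lam *m (D xs)^T - xs) < eta.
Proof.
move=> oU Uxs P0 HD Dc surj eta etap.
set A := D xs.
have Ginj : forall lam : 'rV[R]_k, lam *m (A^T *m A) = 0 -> lam = 0.
  move=> lam H0.
  have w0 : lam *m A^T = 0.
    by apply: dotvv_eq0; rewrite dotvE trmx_mul trmxK mulmxA -(mulmxA lam) H0 mul0mx mxE.
  apply: dotvv_eq0; have [h Hh] := surj lam.
  by rewrite -{2}Hh dotvE trmx_mul mulmxA w0 mul0mx mxE.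
have [Bi HBi] : exists Bi : 'M[R]_k, (A^T *m A) *m Bi = 1%:M.
  apply/row_freeP; rewrite -kermx_eq0; apply/eqP/row_matrixP => i.
  by rewrite row0; apply: Ginj; rewrite -row_mul mulmx_ker row0.
pose b := mnorm Bi + 1.
have bp : 0 < b by rewrite /b; have := mnorm_ge0 Bi; lra.
have lowG : forall lam : 'rV[R]_k, enorm lam <= enorm (lam *m (A^T *m A)) * b.
  move=> lam; have E : lam *m (A^T *m A) *m Bi = lam by rewrite -mulmxA HBi mulmx1.
  rewrite -{1}E; apply: le_trans (enorm_mulmx _ _) _; rewrite ler_wpM2l ?enorm_ge0 //.
  by rewrite /b lerDl.
pose a := mnorm A; have a0 : 0 <= a := mnorm_ge0 A.
pose t := mnorm A^T; have t0 : 0 <= t := mnorm_ge0 A^T.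
pose kk : R := k%:R; have kk0 : 0 <= kk by rewrite /kk ler0n.
have [rU [rUp HU]] := oU xs Uxs.
pose e1 := 1 / (2 * b * (t + 1)).
have e1p : 0 < e1 by rewrite /e1 divr_gt0 // !mulr_gt0 //; lra.
have E1 : e1 * t * (2 * b) <= 1.
  have Ee : e1 * (2 * b * (t + 1)) = 1.
    by rewrite /e1 mul1r mulVf // gt_eqF // !mulr_gt0 //; lra.
  have := mulr_gt0 e1p bp; nra.
pose e2 := 1 / (2 * b * (a + 1)).
have e2p : 0 < e2 by rewrite /e2 divr_gt0 // !mulr_gt0 //; lra.
have E2 : 2 * (e2 * a * b) <= 1.
  have Ee : e2 * (2 * b * (a + 1)) = 1.
    by rewrite /e2 mul1r mulVf // gt_eqF // !mulr_gt0 //; lra.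
  have := mulr_gt0 e2p bp; nra.
have [d1 [d1p Hd1]] := HD xs Uxs e1 e1p.
have [dD [dDp HdD]] := Dc e2 e2p.
pose r0 := Order.min (Order.min rU d1) (Order.min dD eta).
have r0p : 0 < r0 by rewrite !lt_min rUp d1p dDp etap.
have r0U : r0 <= rU by apply: le_trans (minle_l _ _) (minle_l _ _).
have r01 : r0 <= d1 by apply: le_trans (minle_l _ _) (minle_r _ _).
have r0D : r0 <= dD by apply: le_trans (minle_r _ _) (minle_l _ _).
have r0e : r0 <= eta by apply: le_trans (minle_r _ _) (minle_r _ _).
pose rho := (r0 / 2) / (kk * t + 1).
have ktp : 0 < kk * t + 1 by have := mulr_ge0 kk0 t0; lra.
have rhop : 0 < rho by rewrite /rho !divr_gt0 //.
have rhokt : rho * (kk * t) < r0 / 2 by apply: frac_lt; rewrite ?mulr_ge0 // divr_gt0.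
have ae1 : 0 < a + e1 by lra.
pose del := Order.min (r0 / 2) (rho / (4 * b * (a + e1))).
have delp : 0 < del.
  rewrite lt_min divr_gt0 //= divr_gt0 // !mulr_gt0 //; lra.
exists del; split => // y Hy.
have Hy1 : enorm (y - xs) < r0 / 2 by apply: lt_le_trans Hy (minle_l _ _).
have Hy2 : enorm (y - xs) * (4 * b * (a + e1)) < rho.
  rewrite -ltr_pdivlMr; last by rewrite !mulr_gt0 //; lra.
  exact: lt_le_trans Hy (minle_r _ _).
pose q := fun lam : 'rV[R]_k => enorm (Phi (y - lam *m A^T)).
have Zc : forall lam : 'rV[R]_k, (forall i, `|lam 0 i| <= rho) -> enorm (y - lam *m A^T - xs) < r0.
  move=> lam Hl.
  have -> : y - lam *m A^T - xs = (y - xs) - lam *m A^T by rewrite addrAC.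
  apply: le_lt_trans (enormBle _ _) _.
  have H1 : enorm (lam *m A^T) <= kk * rho * t.
    apply: le_trans (enorm_mulmx _ _) _; rewrite ler_wpM2r //; exact: enorm_box.
  have : kk * rho * t = rho * (kk * t) by ring.
  lra.
have ZU : forall lam : 'rV[R]_k, (forall i, `|lam 0 i| <= rho) -> U (y - lam *m A^T).
  by move=> lam Hl; apply: HU; apply: lt_le_trans (Zc _ Hl) r0U.
have qc : forall l : 'rV[R]_k, (forall i, `|l 0 i| <= rho) -> forall e : R, 0 < e ->
     exists d : R, 0 < d /\ forall mu : 'rV[R]_k, (forall i, `|mu 0 i - l 0 i| < d) -> `|q mu - q l| < e.
  move=> l Hl e e0.
  have [dc [dcp Hdc]] := has_deriv_cont (HD _ (ZU _ Hl)) e0.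
  exists (dc / (kk * t + 1)); split; first by rewrite divr_gt0.
  move=> mu Hmu.
  apply: le_lt_trans (enorm_dist _ _) _; apply: Hdc.
  have -> : y - mu *m A^T - (y - l *m A^T) = (l - mu) *m A^T.
    by rewrite mulmxBl; apply/rowP => j; rewrite !mxE; ring.
  apply: le_lt_trans (enorm_mulmx _ _) _; rewrite -/t.
  have H1 : enorm (l - mu) <= kk * (dc / (kk * t + 1)).
    apply: enorm_box => i; rewrite !mxE; have := Hmu i; rewrite distrC => H; exact: ltW.
  have H2 : dc / (kk * t + 1) * (kk * t) < dc by apply: frac_lt; rewrite ?mulr_ge0.
  have : enorm (l - mu) * t <= kk * (dc / (kk * t + 1)) * t by rewrite ler_wpM2r.
  have : kk * (dc / (kk * t + 1)) * t = dc / (kk * t + 1) * (kk * t) by ring.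
  lra.
have [ls [Hls Hmin]] := box_min (ltW rhop) qc.
have Hy1' : enorm (y - xs) < d1 by apply: lt_le_trans r01; apply: lt_trans Hy1 _; lra.
have Py : enorm (Phi y) <= enorm (y - xs) * (a + e1).
  have := Hd1 _ Hy1'; rewrite (_ : xs + (y - xs) = y); last by rewrite addrC subrK.
  rewrite P0 subr0 => H.
  have := enorm_rev (Phi y) ((y - xs) *m A); have := enorm_mulmx (y - xs) A.
  rewrite -/a; lra.
have bnd : forall lam : 'rV[R]_k, (forall i, `|lam 0 i| <= rho) -> rho <= enorm lam -> q 0 < q lam.
  move=> lam Hl Hr.
  rewrite /q mul0mx subr0.
  set z := y - lam *m A^T.
  have hz : enorm (z - xs) < d1 := lt_le_trans (Zc _ Hl) r01.
  have := Hd1 _ hz; rewrite (_ : xs + (z - xs) = z); last by rewrite addrC subrK.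
  rewrite P0 subr0 => Hz.
  have EG : lam *m (A^T *m A) = (y - xs) *m A - (z - xs) *m A.
    rewrite -mulmxBl (_ : y - xs - (z - xs) = lam *m A^T) ?mulmxA //.
    by rewrite /z; apply/rowP => j; rewrite !mxE; ring.
  have f1 := lowG lam.
  have f2 : enorm (lam *m (A^T *m A)) <= enorm ((y - xs) *m A) + enorm ((z - xs) *m A).
    by rewrite EG enormBle.
  have f3 : enorm ((y - xs) *m A) <= enorm (y - xs) * a := enorm_mulmx _ _.
  have f4 : enorm ((z - xs) *m A) <= enorm (Phi z) + e1 * enorm (z - xs).
    have := enorm_rev ((z - xs) *m A) (Phi z); rewrite enormB; lra.
  have f5 : enorm (z - xs) <= enorm (y - xs) + enorm lam * t.
    rewrite (_ : z - xs = (y - xs) - lam *m A^T); last by rewrite /z addrAC.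
    by apply: le_trans (enormBle _ _) _; rewrite lerD2l enorm_mulmx.
  have Y0 := enorm_ge0 (y - xs).
  have L0 := enorm_ge0 lam.
  have g1 : enorm lam <= (enorm (y - xs) * a + enorm (Phi z) + e1 * (enorm (y - xs) + enorm lam * t)) * b.
    apply: le_trans f1 _; rewrite ler_wpM2r ?(ltW bp) //.
    apply: le_trans f2 _.
    have : e1 * enorm (z - xs) <= e1 * (enorm (y - xs) + enorm lam * t) by rewrite ler_wpM2l ?(ltW e1p).
    lra.
  have g2 : e1 * t * (2 * b) * enorm lam <= enorm lam by rewrite -[leRHS]mul1r ler_wpM2r.
  have g4 : b * enorm (Phi y) <= b * (enorm (y - xs) * (a + e1)) by rewrite ler_wpM2l ?(ltW bp).
  have g5 : enorm (y - xs) * (4 * b * (a + e1)) < enorm lam by apply: lt_le_trans Hy2 Hr.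
  have : b * enorm (Phi y) < b * enorm (Phi z) by nra.
  by rewrite ltr_pM2l.
have Lint : enorm ls < rho.
  rewrite ltNge; apply/negP => H.
  have := bnd _ Hls H.
  have := Hmin 0 (fun i => ltac:(by rewrite mxE normr0 ltW)).
  lra.
set z := y - ls *m A^T.
have Uz : U z := ZU _ Hls.
have rpos : 0 < rho - enorm ls by lra.
have Hmin' : forall mu : 'rV[R]_k, enorm mu < rho - enorm ls ->
    enorm (Phi z) <= enorm (Phi (z - mu *m A^T)).
  move=> mu Hmu.
  have Hb : forall i, `|(ls + mu) 0 i| <= rho.
    move=> i; apply: le_trans (coord_le _ i) _; apply: le_trans (enormD _ _) _; lra.
  have := Hmin _ Hb; rewrite /q (_ : y - (ls + mu) *m A^T = z - mu *m A^T) //.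
  by rewrite /z mulmxDl opprD addrA.
have FO := fo_cond (HD _ Uz) rpos Hmin'.
rewrite trmx_mul trmxK in FO.
set Ph := Phi z in FO *.
have EG : Ph *m (A^T *m A) = Ph *m (A - D z)^T *m A.
  rewrite raddfB /= mulmxBr mulmxBl -!mulmxA.
  by rewrite FO subr0.
have nz : mnorm (D z - A) < e2 by apply: HdD; apply: lt_le_trans (Zc _ Hls) r0D.
have f1 := lowG Ph.
have f2 : enorm (Ph *m (A^T *m A)) <= enorm Ph * mnorm (D z - A) * a.
  rewrite EG; apply: le_trans (enorm_mulmx _ _) _; rewrite ler_wpM2r //.
  by apply: le_trans (enorm_mulmx _ _) _; rewrite mnorm_tr -mnormN opprB.
have P0' := enorm_ge0 Ph.
have f3 : enorm Ph * mnorm (D z - A) * a * b <= enorm Ph * e2 * a * b.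
  rewrite ler_wpM2r ?(ltW bp) // ler_wpM2r // ler_wpM2l // ltW //.
have f4 : 2 * (enorm Ph * e2 * a * b) <= enorm Ph.
  have : enorm Ph * (2 * (e2 * a * b)) <= enorm Ph * 1 by rewrite ler_wpM2l.
  rewrite mulr1; move=> H; apply: le_trans H; rewrite le_eqVlt; apply/orP; left; apply/eqP; ring.
have f5 : enorm (Ph *m (A^T *m A)) * b <= enorm Ph * mnorm (D z - A) * a * b.
  by rewrite ler_wpM2r ?(ltW bp).
have Ph0 : Ph = 0.
  apply: enorm_eq0; apply/eqP; rewrite eq_le enorm_ge0 andbT; lra.
exists ls; split; first exact: Uz.
split; first exact: Ph0.
exact: lt_le_trans (Zc _ Hls) r0e.
Qed.

End IFT2.

Section Convex.
Variable R : realType.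

Lemma dotv_sym n (Hm : 'M[R]_n) (p d : 'rV[R]_n) : Hm^T = Hm ->
  dotv p (d *m Hm) = dotv d (p *m Hm).
Proof. by move=> sym; rewrite dotvC !dotvE trmx_mul sym mulmxA. Qed.

Lemma quad_exp n (g : 'rV[R]_n) (Hm : 'M[R]_n) (p d : 'rV[R]_n) (s : R) : Hm^T = Hm ->
  (dotv g (p + s *: d) + 2^-1 * dotv (p + s *: d) ((p + s *: d) *m Hm) =
  dotv g p + 2^-1 * dotv p (p *m Hm) + s * (dotv g d + dotv d (p *m Hm))
    + s ^+ 2 / 2 * dotv d (d *m Hm))%R.
Proof.
move=> sym; rewrite mulmxDl !dotvDl !dotvDr -scalemxAl !dotvZl !dotvZr (dotv_sym p d sym).
by field.
Qed.

Lemma Qfin n (gx : 'rV[R]_n) (Hm : 'M[R]_n) (Psi : 'rV[R]_n -> \bar R) (xt p : 'rV[R]_n) :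
  (forall x, Psi x != -oo%E) -> Qmodel gx Hm Psi xt p \is a fin_num ->
  exists c P : R, Psi xt = c%:E /\ Psi (xt + p)%R = P%:E.
Proof.
move=> nm; rewrite /Qmodel.
have := nm xt; have := nm (xt + p)%R.
case: (Psi xt) => [c| |]; case: (Psi (xt + p)%R) => [P| |] //= _ _; try by [].
by move=> _; exists c, P.
Qed.

Lemma subdiff_fin n (Psi : 'rV[R]_n -> \bar R) y g : subdiff Psi y g -> Psi y = (fine (Psi y))%:E.
Proof. by move=> [H _]; rewrite fineK. Qed.

Lemma subdiff_mono n (Psi : 'rV[R]_n -> \bar R) y1 y2 g1 g2 :
  subdiff Psi y1 g1 -> subdiff Psi y2 g2 -> (0 <= dotv (g1 - g2) (y1 - y2))%R.
Proof.
move=> H1 H2; have E1 := subdiff_fin H1; have E2 := subdiff_fin H2.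
have := H1.2 y2; have := H2.2 y1; rewrite E1 E2 -!EFinD !lee_fin => A1 A2.
rewrite dotvBl !dotvBr; move: A1 A2; rewrite !dotvBr; lra.
Qed.

Lemma sum_rule n (gx : 'rV[R]_n) (Hm : 'M[R]_n) (Psi : 'rV[R]_n -> \bar R) (xt p r : 'rV[R]_n) :
  Hm^T = Hm -> convex_fun Psi -> (forall x, Psi x != -oo%E) ->
  subdiff (Qmodel gx Hm Psi xt) p r -> subdiff Psi (xt + p)%R (r - gx - p *m Hm)%R.
Proof.
move=> sym cvx nm [Qf Hq].
have [c [P [Ec EP]]] := Qfin nm Qf.
split; first by rewrite EP.
move=> w.
case EW: (Psi w) => [W| |]; last by have := nm w; rewrite EW.
  2: by rewrite leey.
rewrite EP -EFinD lee_fin.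
set d := (w - (xt + p))%R.
set v := (r - gx - p *m Hm)%R.
set K := dotv d (d *m Hm).
have key : forall s : R, (0 < s < 1)%R -> (dotv v d <= W - P + s / 2 * K)%R.
  move=> s s01.
  have hc := cvx w (xt + p)%R s s01.
  rewrite EW EP -!EFinM -EFinD in hc.
  set zs := (s *: w + (1 - s) *: (xt + p))%R in hc.
  case EZ: (Psi zs) hc => [Zs| |] //; last by have := nm zs; rewrite EZ.
  rewrite lee_fin => hc.
  have Ez : (xt + (p + s *: d))%R = zs.
    by rewrite /zs /d; apply/rowP => j; rewrite !mxE; ring.
  have := Hq (p + s *: d)%R.
  rewrite /Qmodel Ez EZ EP Ec (_ : (p + s *: d - p = s *: d)%R); last by rewrite addrC addKr.
  rewrite -!EFinN -!EFinD lee_fin quad_exp // dotvZr.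
  move=> hq.
  have s0 : (0 < s)%R by case/andP: s01.
  have : (s * dotv v d <= s * (W - P + s / 2 * K))%R.
    rewrite /v !dotvBl (dotvC (p *m Hm) d).
    move: hq hc; rewrite /K; lra.
  by rewrite ler_pM2l.
set X := (dotv v d - (W - P))%R.
have : (X <= 0)%R.
  apply: (@le0_eps _ _ `|K|) => // e e0.
  pose s := Order.min e (2^-1 : R).
  have sp : (0 < s)%R by rewrite lt_min e0 invr_gt0 ltr0n.
  have s1 : (s < 1)%R by apply: le_lt_trans (minle_r _ _) _; rewrite invf_lt1 ?ltr0n // ltr1n.
  have se : (s <= e)%R := minle_l _ _.
  have := key s (introT andP (conj sp s1)).
  have : (s / 2 * K <= e * `|K|)%R.
    apply: le_trans (ler_norm _) _; rewrite normrM (ger0_norm (ltW _)) ?divr_gt0 //.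
    rewrite ler_wpM2r //; apply: le_trans se; rewrite ler_pdivrMr ?ltr0n //.
    by rewrite ler_peMr ?ler1n // ltW.
  rewrite /X; lra.
rewrite /X; lra.
Qed.

End Convex.

Section Aff.
Variable R : realType.

Lemma split_l m n (i : 'I_m) : split (lshift n i) = inl i.
Proof. exact: (@unsplitK m n (inl i)). Qed.

Lemma split_r m n (i : 'I_n) : split (rshift m i) = inr i.
Proof. exact: (@unsplitK m n (inr i)). Qed.

Lemma aff_single n (S : set 'rV[R]_n) g : S g -> aff_span S g.
Proof.
move=> Sg; exists 1%N, (fun _ => 1), (fun _ => g); split => //.
  by rewrite big_ord1.
by rewrite big_ord1 scale1r.
Qed.

Lemma aff_comb2 n (S : set 'rV[R]_n) a b (al : R) :
  aff_span S a -> aff_span S b -> aff_span S (al *: a + (1 - al) *: b).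
Proof.
move=> [m1 [l1 [g1 [H1 S1 E1]]]] [m2 [l2 [g2 [H2 S2 E2]]]].
exists (m1 + m2)%N,
  (fun i => match split i with inl i1 => al * l1 i1 | inr i2 => (1 - al) * l2 i2 end),
  (fun i => match split i with inl i1 => g1 i1 | inr i2 => g2 i2 end).
split.
- by move=> i; case: (split i) => j.
- rewrite big_split_ord /=.
  under eq_bigr do rewrite split_l.
  under [X in _ + X = _]eq_bigr do rewrite split_r.
  by rewrite /= -!mulr_sumr S1 S2 !mulr1 addrC subrK.
- rewrite big_split_ord /=.
  under eq_bigr do rewrite split_l.
  under [X in _ = _ + X]eq_bigr do rewrite split_r.
  rewrite /= E1 E2 !scaler_sumr; congr (_ + _); apply: eq_bigr => i _; by rewrite scalerA.
Qed.

Lemma aff_translate n (S : set 'rV[R]_n) (c y : 'rV[R]_n) :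
  aff_span S y -> aff_span [set v | exists u, S u /\ v = c + u] (c + y).
Proof.
move=> [m [l [g [H1 S1 E1]]]].
exists m, l, (fun i => c + g i); split.
- by move=> i; exists (g i).
- exact: S1.
- rewrite E1; apply/esym; under eq_bigr do rewrite scalerDr.
  by rewrite big_split /= -scaler_suml S1 scale1r.
Qed.

Lemma relint_ball n (gradf : 'rV[R]_n -> 'rV[R]_n) (Psi : 'rV[R]_n -> \bar R) xs (M : set 'rV[R]_n)
   k U (Phi : 'rV[R]_n -> 'rV[R]_k) DPhi :
  relint (subdiffF gradf Psi xs) 0 ->
  (exists s, forall y, aff_span (subdiff Psi xs) y <-> normal_space M xs (y - s)) ->
  manifold_chart M xs U Phi DPhi ->
  subdiff Psi xs (- gradf xs) /\ exists e0 : R, 0 < e0 /\ forall u,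
    (forall h, h *m DPhi xs = 0 -> dotv u h = 0) -> enorm u < e0 -> subdiff Psi xs (- gradf xs + u).
Proof.
move=> [[u0 [Hu0 E0]] [e [ep He]]] [s Hs] ch.
have gb : u0 = - gradf xs by apply/eqP; rewrite -addr_eq0 addrC -E0.
rewrite gb in Hu0; split => //.
exists e; split => // u Hu ue.
have Nu : forall w, (forall h, h *m DPhi xs = 0 -> dotv w h = 0) -> normal_space M xs w.
  by move=> w Hw; exists k, U, Phi, DPhi.
have As : aff_span (subdiff Psi xs) s.
  by apply/Hs; rewrite subrr; apply: Nu => h _; rewrite dotv0l.
have Aus : aff_span (subdiff Psi xs) (u + s).
  by apply/Hs; rewrite addrK; apply: Nu.
have Ag : aff_span (subdiff Psi xs) (- gradf xs) by apply: aff_single.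
have Am := aff_comb2 (2^-1) Ag Aus.
have A2 := aff_comb2 2 Am As.
have E : 2 *: (2^-1 *: - gradf xs + (1 - 2^-1) *: (u + s)) + (1 - 2) *: s = - gradf xs + u.
  by apply/rowP => j; rewrite !mxE; field.
rewrite E in A2.
have := aff_translate (gradf xs) A2; rewrite addNKr => Au.
have := He u Au; rewrite subr0 => /(_ ue) [u' [Hu' Eu]].
by rewrite (_ : - gradf xs + u = u') // Eu addKr.
Qed.

End Aff.

Section Psd.
Variable R : realType.

Lemma dotv_adj m k (x : 'rV[R]_k) (B : 'M[R]_(m, k)) (h : 'rV[R]_m) :
  dotv (x *m B^T) h = dotv x (h *m B).
Proof. by rewrite !dotvE trmx_mul mulmxA. Qed.

Lemma enorm_delta k (i : 'I_k) : enorm (delta_mx 0 i : 'rV[R]_k) = 1.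
Proof.
rewrite /enorm (_ : dotv _ _ = 1) ?sqrtr1 //.
rewrite /dotv (bigD1 i) //= !mxE !eqxx /= mulr1 big1 ?addr0 // => j /negbTE ji.
by rewrite !mxE ji /= mulr0.
Qed.

Lemma psd_cs n (Hm : 'M[R]_n) (u v : 'rV[R]_n) : Hm^T = Hm ->
  (forall w, 0 <= dotv w (w *m Hm)) ->
  dotv u (v *m Hm) ^+ 2 <= dotv u (u *m Hm) * dotv v (v *m Hm).
Proof.
move=> sym psd; apply: discr; first exact: psd.
move=> t; have := psd (u - t *: v).
rewrite mulmxBl -scalemxAl !dotvBl !dotvBr !dotvZl !dotvZr (dotv_sym v u sym).
by rewrite (_ : _ - _ = dotv u (u *m Hm) - 2 * t * dotv u (v *m Hm) + t ^+ 2 * dotv v (v *m Hm)) //; ring.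
Qed.

Lemma psd_bound n (Hm : 'M[R]_n) (Mb : R) (p : 'rV[R]_n) : Hm^T = Hm ->
  (forall w, 0 <= dotv w (w *m Hm)) -> (forall w, dotv w (w *m Hm) <= Mb * dotv w w) ->
  0 <= Mb -> enorm (p *m Hm) <= Mb * enorm p.
Proof.
move=> sym psd up Mb0.
set q := p *m Hm.
have cs := psd_cs q p sym psd.
rewrite (_ : dotv q (p *m Hm) = dotv q q) // in cs.
have Q0 := dotvv_ge0 q; have P0 := dotvv_ge0 p.
have h2 : dotv q (q *m Hm) * dotv p (p *m Hm) <= (Mb * dotv q q) * (Mb * dotv p p).
  by apply: ler_pM; rewrite ?psd ?up.
have key : dotv q q <= Mb ^+ 2 * dotv p p.
  case: (eqVneq (dotv q q) 0) => [->|qn0]; first by rewrite mulr_ge0 ?sqr_ge0.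
  have qp : 0 < dotv q q by rewrite lt_def qn0 Q0.
  rewrite -(ler_pM2l qp); move: (le_trans cs h2); rewrite expr2; nra.
apply: sqr_le_nonneg; first by rewrite mulr_ge0 ?enorm_ge0.
by rewrite exprMn !enorm_sqr.
Qed.

End Psd.

Section Ident.
Variable R : realType.

Lemma gram_bound n k (A : 'M[R]_(n, k)) : (forall v : 'rV[R]_k, exists h, h *m A = v) ->
  exists b : R, 0 < b /\ forall lam : 'rV[R]_k, enorm lam <= enorm (lam *m (A^T *m A)) * b.
Proof.
move=> surj.
have Ginj : forall lam : 'rV[R]_k, lam *m (A^T *m A) = 0 -> lam = 0.
  move=> lam H0.
  have w0 : lam *m A^T = 0.
    by apply: dotvv_eq0; rewrite dotvE trmx_mul trmxK mulmxA -(mulmxA lam) H0 mul0mx mxE.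
  apply: dotvv_eq0; have [h Hh] := surj lam.
  by rewrite -{2}Hh dotvE trmx_mul mulmxA w0 mul0mx mxE.
have [Bi HBi] : exists Bi : 'M[R]_k, (A^T *m A) *m Bi = 1%:M.
  apply/row_freeP; rewrite -kermx_eq0; apply/eqP/row_matrixP => i.
  by rewrite row0; apply: Ginj; rewrite -row_mul mulmx_ker row0.
exists (mnorm Bi + 1); split; first by have := mnorm_ge0 Bi; lra.
move=> lam; have E : lam *m (A^T *m A) *m Bi = lam by rewrite -mulmxA HBi mulmx1.
rewrite -{1}E; apply: le_trans (enorm_mulmx _ _) _; rewrite ler_wpM2l ?enorm_ge0 //.
by rewrite lerDl.
Qed.

Lemma dotv_delta k (i : 'I_k) (w : 'rV[R]_k) : dotv (delta_mx 0 i) w = w 0 i.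
Proof.
rewrite /dotv (bigD1 i) //= !mxE !eqxx /= mul1r big1 ?addr0 // => j /negbTE ji.
by rewrite !mxE ji /= mul0r.
Qed.

Lemma ident n k (Psi : 'rV[R]_n -> \bar R) (M : set 'rV[R]_n) (xs gb : 'rV[R]_n)
  (U : set 'rV[R]_n) (Phi : 'rV[R]_n -> 'rV[R]_k) (D : 'rV[R]_n -> 'M[R]_(n, k)) :
  open_set U -> U xs -> Phi xs = 0 -> (forall y, U y -> (M y <-> Phi y = 0)) ->
  (forall y, U y -> has_deriv Phi y (D y)) ->
  (forall e : R, 0 < e -> exists d : R, 0 < d /\ forall y, enorm (y - xs) < d -> mnorm (D y - D xs) < e) ->
  (forall v : 'rV[R]_k, exists h, h *m D xs = v) ->
  (exists e0 : R, 0 < e0 /\ forall u, (forall h, h *m D xs = 0 -> dotv u h = 0) -> enorm u < e0 ->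
      subdiff Psi xs (gb + u)) ->
  (forall g, subdiff Psi xs g -> forall e : R, 0 < e -> exists d : R, 0 < d /\
     forall y, M y -> enorm (y - xs) < d -> exists g', subdiff Psi y g' /\ enorm (g' - g) < e) ->
  exists dI eI : R, 0 < dI /\ 0 < eI /\ forall y v, enorm (y - xs) < dI -> subdiff Psi y v ->
     enorm (v - gb) < eI -> M y.
Proof.
move=> oU Uxs P0 HM HD Dc surj [e0 [e0p Hball]] Hinner.
set A := D xs in surj Hball *.
have [b [bp lowG]] := gram_bound surj.
pose t := mnorm A^T; have t0 : 0 <= t := mnorm_ge0 _.
pose rho := e0 / (t + 1).
have rhop : 0 < rho by rewrite divr_gt0 //; lra.
pose kk : R := k%:R; have kk0 : 0 <= kk by rewrite ler0n.
pose kap := 1 / (2 * (kk + 1) * (b + 1)).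
have kapp : 0 < kap by rewrite divr_gt0 // !mulr_gt0 //; lra.
have Ekap : kap * (2 * (kk + 1) * (b + 1)) = 1.
  by rewrite /kap mul1r mulVf // gt_eqF // !mulr_gt0 //; lra.
pose eps := kap * rho / 2.
have epsp : 0 < eps by rewrite divr_gt0 // mulr_gt0.
pose a_ := fun i : 'I_k => (delta_mx 0 i : 'rV[R]_k) *m A^T.
pose sg := fun (s : bool) => if s then rho else - rho.
pose gj := fun j : 'I_k * bool => gb + sg j.2 *: a_ j.1.
have gjS : forall j, subdiff Psi xs (gj j).
  move=> [i s]; apply: Hball.
    by move=> h Hh; rewrite dotvZl dotv_adj Hh dotv0r mulr0.
  rewrite enormZ (_ : `|sg s| = rho); last by rewrite /sg; case: s; rewrite ?normrN ger0_norm // ltW.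
  apply: le_lt_trans (_ : rho * t < e0); last by rewrite mulrC /rho mulrC; apply: frac_lt.
  rewrite ler_wpM2l ?(ltW rhop) //; apply: le_trans (enorm_mulmx _ _) _.
  by rewrite enorm_delta mul1r.
have : forall j, exists d : R, 0 < d /\ forall y, M y -> enorm (y - xs) < d ->
    exists g', subdiff Psi y g' /\ enorm (g' - gj j) < eps.
  by move=> j; exact: Hinner (gjS j) eps epsp.
move=> /choice [f Hf].
pose dm := \big[Order.min/1]_(j : 'I_k * bool) f j.
have dmp : 0 < dm.
  apply: (@big_ind _ (fun x : R => 0 < x)); first exact: ltr01.
    by move=> x y xp yp; rewrite lt_min xp yp.
  by move=> j _; case: (Hf j).
have dmle : forall j, dm <= f j by move=> j; rewrite /dm (bigD1 j) //= ge_min lexx.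
have [dz [dzp Hz]] := zero_near oU Uxs P0 HD Dc surj dmp.
exists dz, eps; split => //; split => // y v Hy Hv Hvg.
have [lam [Uz [Pz Hzx]]] := Hz y Hy.
rewrite -/A in Uz Pz Hzx.
have Mz : M (y - lam *m A^T) by apply/(HM _ Uz).
set d := lam *m A^T in Uz Pz Hzx Mz.
have Ed : y - (y - d) = d by rewrite opprB addrC subrK.
have key : forall i s, sg s * (d *m A) 0 i <= (eps + eps) * enorm d.
  move=> i s.
  have [g' [Hg' Hgd]] := (Hf (i, s)).2 _ Mz (lt_le_trans Hzx (dmle (i, s))).
  have mono := subdiff_mono Hv Hg'; rewrite Ed in mono.
  have E : v - g' = (v - gb) - sg s *: a_ i + (gj (i, s) - g').
    by rewrite /gj /=; apply/rowP => j; rewrite !mxE; ring.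
  rewrite E dotvDl dotvDl dotvNl dotvZl /a_ dotv_adj dotv_delta in mono.
  have h1 := dotv_le' (v - gb) d.
  have h2 := dotv_le' (gj (i, s) - g') d.
  rewrite -/(gj (i, s)) in Hgd.
  have h3 : enorm (v - gb) * enorm d <= eps * enorm d by rewrite ler_wpM2r ?enorm_ge0 // ltW.
  have h4 : enorm (gj (i, s) - g') * enorm d <= eps * enorm d.
    by rewrite ler_wpM2r ?enorm_ge0 // enormB ltW.
  lra.
have coord : forall i, `|(d *m A) 0 i| <= kap * enorm d.
  move=> i; have k1 := key i true; have k2 := key i false.
  rewrite /sg /= in k1 k2.
  have : rho * `|(d *m A) 0 i| <= rho * (kap * enorm d).
    have E2 : eps + eps = kap * rho by rewrite /eps; field.
    rewrite E2 in k1 k2.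
    case: (lerP 0 ((d *m A) 0 i)) => hs.
      by rewrite ger0_norm //; lra.
    by rewrite ltr0_norm //; lra.
  by rewrite ler_pM2l.
have dA : enorm (d *m A) <= kk * (kap * enorm d) by apply: enorm_box.
have lamb : enorm lam <= enorm (d *m A) * b by rewrite /d -mulmxA; apply: lowG.
have dd : dotv d d <= enorm lam * enorm (d *m A).
  by rewrite {1}/d dotv_adj; apply: dotv_le'.
have D0 := enorm_ge0 d; have L0 := enorm_ge0 lam; have DA0 := enorm_ge0 (d *m A).
have f1 : kk * kap * 2 <= 1 by nra.
have f2 : kk * kap * b * 2 <= 1 by nra.
have dd2 : dotv d d <= enorm (d *m A) * b * enorm (d *m A).
  by apply: le_trans dd _; rewrite ler_wpM2r.
have f3 : enorm (d *m A) * b * enorm (d *m A) <= (kk * (kap * enorm d)) * b * (kk * (kap * enorm d)).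
  by apply: ler_pM; rewrite ?mulr_ge0 ?(ltW bp) // ler_wpM2r ?(ltW bp).
have f4 : (kk * (kap * enorm d)) * b * (kk * (kap * enorm d)) <= dotv d d / 4.
  rewrite -enorm_sqr.
  have -> : kk * (kap * enorm d) * b * (kk * (kap * enorm d)) = (kk * kap) * (kk * kap * b) * enorm d ^+ 2 by ring.
  have Z := sqr_ge0 (enorm d).
  have : (kk * kap) * (kk * kap * b) <= 4^-1.
    have : (kk * kap) * (kk * kap * b) * 4 <= 1.
      have p1 : 0 <= kk * kap by rewrite mulr_ge0 // ltW.
      have p2 : 0 <= kk * kap * b by rewrite mulr_ge0 // ltW.
      nra.
    by rewrite -ler_pdivlMr ?ltr0n // mul1r.
  move=> H; rewrite -[_ / 4]mulrC; apply: ler_wpM2r => //.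
have d0 : d = 0.
  apply: dotvv_eq0; apply/eqP; rewrite eq_le dotvv_ge0 andbT.
  have := le_trans dd2 (le_trans f3 f4); lra.
by move: Mz; rewrite d0 subr0.
Qed.

End Ident.

Theorem theorem1 (R : realType) (n : nat)
  (f : 'rV[R]_n -> R) (gradf : 'rV[R]_n -> 'rV[R]_n) (Psi : 'rV[R]_n -> \bar R)
  (* standing assumptions *)
  (Hgrad : has_gradient f gradf)
  (Hgcont : continuous_on gradf setT)
  (Hglip : exists L0 : R, forall y z, enorm (gradf y - gradf z) <= L0 * enorm (y - z))
  (Hconv : convex_fun Psi) (Hprop : proper_fun Psi) (Hlsc : lsc_fun Psi)
  (Hsol : exists xm, forall y, (Fobj f Psi xm <= Fobj f Psi y)%E)
  (* the point x*, the manifold, smoothness near x* *)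
  (xs : 'rV[R]_n) (M : set 'rV[R]_n)
  (Hrelint : relint (subdiffF gradf Psi xs) 0)
  (Hps : partly_smooth Psi xs M)
  (L : R) (HL : 0 < L)
  (HLloc : exists rho : R, 0 < rho /\ forall y z, enorm (y - xs) < rho ->
             enorm (z - xs) < rho -> enorm (gradf y - gradf z) <= L * enorm (y - z))
  (* the ISQA run *)
  (gamma beta : R) (x : nat -> 'rV[R]_n) (Hs : nat -> 'M[R]_n) (eps : nat -> R)
  (p r : nat -> 'rV[R]_n) (alpha : nat -> R)
  (Hx0 : Psi (x 0%N) \is a fin_num)
  (Hrun : isqa_run f gradf Psi gamma beta x Hs eps p r alpha)
  (m Mb : R) (Hm : 0 < m) (HmM : m <= Mb)
  (HHbd : forall t v, m * dotv v v <= dotv v (v *m Hs t) /\ dotv v (v *m Hs t) <= Mb * dotv v v) :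
  exists epsilon delta : R, 0 < epsilon /\ 0 < delta /\
    forall t : nat, enorm (x t - xs) <= delta -> eps t <= epsilon -> alpha t = 1 ->
      M (x t.+1).
Proof.
have nm : forall y, Psi y != -oo%E := Hprop.1.
move: Hps => [Mxs [_ [[k [U [Phi [DPhi [[oU Uxs C2 HD surj] HM]]]]] _] Hii Hiii _]].
have ch : manifold_chart M xs U Phi DPhi by split.
have P0 : Phi xs = 0 by apply/(HM _ Uxs).
move: C2 => [DF [HDF [DG [HDG _]]]].
have DFe : forall y, U y -> DPhi y = DF y.
  by move=> y Uy; apply: has_deriv_uniq (HD _ Uy) (HDF _ Uy).
have [rU [rUp HU]] := oU xs Uxs.
have Dc : forall e : R, 0 < e -> exists d : R, 0 < d /\
    forall y, enorm (y - xs) < d -> mnorm (DPhi y - DPhi xs) < e.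
  move=> e e0.
  pose c : R := (k * n)%:R + 1.
  have cp : 0 < c by rewrite /c ltr_wpDl ?ler0n.
  have [d [dp Hd]] := has_deriv_cont (HDG _ Uxs) (divr_gt0 e0 cp).
  exists (Order.min d rU); split; first by rewrite lt_min dp rUp.
  move=> y Hy.
  have Uy : U y by apply: HU; apply: lt_le_trans Hy (minle_r _ _).
  rewrite (DFe _ Uy) (DFe _ Uxs).
  apply: le_lt_trans (mnorm_mxvec _) _.
  have := Hd y (lt_le_trans Hy (minle_l _ _)); rewrite /= => H.
  rewrite raddfB /=.
  have H2 : enorm (mxvec (DF y) - mxvec (DF xs)) * c < e by rewrite -ltr_pdivlMr.
  have H3 := enorm_ge0 (mxvec (DF y) - mxvec (DF xs)).
  have : (k * n)%:R * enorm (mxvec (DF y) - mxvec (DF xs)) <= enorm (mxvec (DF y) - mxvec (DF xs)) * c.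
    rewrite mulrC.
    by rewrite ler_wpM2l // /c lerDl.
  lra.
have [Hgb [e0 [e0p Hball]]] := relint_ball Hrelint Hii ch.
have [dI [eI [dIp [eIp HI]]]] := ident oU Uxs P0 HM HD Dc surj (ex_intro _ e0 (conj e0p Hball)) Hiii.1.
have [L0 HL0] := Hglip.
pose L1 := `|L0|.
have L10 : 0 <= L1 := normr_ge0 _.
have HL1 : forall y z, enorm (gradf y - gradf z) <= L1 * enorm (y - z).
  by move=> y z; apply: le_trans (HL0 y z) _; rewrite ler_wpM2r ?enorm_ge0 // ler_norm.
have Mb0 : 0 < Mb := lt_le_trans Hm HmM.
pose eta := Order.min dI (eI / (Mb + 1)) / 3.
have etap : 0 < eta by rewrite /eta divr_gt0 // lt_min dIp divr_gt0 //; lra.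
have eta1 : eta * 3 <= dI by rewrite /eta divfK ?pnatr_eq0 // minle_l.
have eta2 : eta * 3 * (Mb + 1) <= eI.
  rewrite /eta divfK ?pnatr_eq0 // -ler_pdivlMr; last by lra.
  exact: minle_r.
pose c0 := m * eta / 8.
have c0p : 0 < c0 by rewrite /c0 divr_gt0 // mulr_gt0.
have c0e : c0 * 8 = m * eta by rewrite /c0 divfK ?pnatr_eq0.
pose del := Order.min eta (c0 / (L1 + Mb + 1)).
have delp : 0 < del by rewrite lt_min etap divr_gt0 //; lra.
have del1 : del <= eta := minle_l _ _.
have del2 : del * (L1 + Mb + 1) <= c0.
  by rewrite -ler_pdivlMr; [exact: minle_r | lra].
exists c0, del; split => //; split => // t Hxt Heps Ha.
move: Hrun => [[_ _ epsge] [Hsym Hmin _ Hx]].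
have [sym psd] := Hsym t.
have [[Hr _] Hre] := Hmin t.
have Hv := sum_rule sym Hconv nm Hr.
have Ey : x t.+1 = x t + p t by rewrite Hx Ha scale1r.
  set P := p t; set E := x t - xs.
set Q := P *m Hs t.
set Dl := gradf (x t) - gradf xs.
have HQ : enorm Q <= Mb * enorm P.
  by apply: (psd_bound P sym psd _ (ltW Mb0)) => w; case: (HHbd t w).
have HDl : enorm Dl <= L1 * enorm E := HL1 _ _.
have HE : enorm E <= del := Hxt.
have Hrr : enorm (r t) <= c0 by apply: le_trans Hre Heps.
have mono := subdiff_mono Hv Hgb.
have Ev : r t - gradf (x t) - Q - - gradf xs = (r t - Dl) - Q.
  by rewrite /Dl; apply/rowP => j; rewrite !mxE; ring.
have Eyy : x t + P - xs = P + E by rewrite /E addrCA addrA.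
rewrite Ev Eyy dotvBl in mono.
have a1 : dotv (r t - Dl) (P + E) <= (enorm (r t) + enorm Dl) * (enorm P + enorm E).
  apply: le_trans (dotv_le' _ _) _; apply: ler_pM; rewrite ?enorm_ge0 ?enormBle ?enormD //.
have a2 : m * dotv P P <= dotv Q (P + E) - dotv Q E.
  by rewrite dotvDr addrK dotvC; case: (HHbd t P).
have a3 : - dotv Q E <= Mb * enorm P * enorm E.
  rewrite -dotvNl; apply: le_trans (dotv_le' _ _) _; rewrite enormN ler_wpM2r ?enorm_ge0 //.
have P0' := enorm_ge0 P; have E0 := enorm_ge0 E.
have bound : m * enorm P ^+ 2 <= (c0 + L1 * del) * (enorm P + del) + Mb * enorm P * del.
  rewrite enorm_sqr.
  have b1 : (enorm (r t) + enorm Dl) * (enorm P + enorm E) <= (c0 + L1 * del) * (enorm P + del).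
    apply: ler_pM; rewrite ?addr_ge0 ?enorm_ge0 //; last by rewrite lerD2l.
    apply: lerD => //; apply: le_trans HDl _; rewrite ler_wpM2l //.
  have b2 : Mb * enorm P * enorm E <= Mb * enorm P * del by rewrite ler_wpM2l // mulr_ge0 // ltW.
  lra.
have pb : enorm P <= eta.
  rewrite leNgt; apply/negP => hP.
  have hd : del < enorm P by apply: le_lt_trans del1 hP.
  have s1 : (c0 + L1 * del) * (enorm P + del) <= (c0 + L1 * del) * (2 * enorm P).
    apply: ler_wpM2l; last by lra.
    by apply: addr_ge0; [exact: ltW | exact: mulr_ge0 L10 (ltW delp)].
  have s2 : L1 * del <= c0 by have := mulr_ge0 L10 (ltW delp); have := ltW Mb0; nra.
  have s3 : Mb * del <= c0 by have := mulr_ge0 L10 (ltW delp); have := ltW Mb0; nra.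
  have s4 : (c0 + L1 * del) * (2 * enorm P) <= (c0 + c0) * (2 * enorm P).
    by rewrite ler_wpM2r ?mulr_ge0 //; lra.
  have s5 : Mb * enorm P * del <= c0 * enorm P.
    by rewrite mulrAC ler_wpM2r.
  have s6 : m * enorm P ^+ 2 <= 5 * c0 * enorm P by lra.
  have s7 : m * (enorm P * enorm P) <= m * (eta * enorm P) * 5 / 8.
    by rewrite -expr2 (_ : m * (eta * enorm P) * 5 / 8 = 5 * c0 * enorm P) // /c0; ring.
  have s8 : m * (eta * enorm P) < m * (enorm P * enorm P).
    have hp := lt_trans etap hP.
    by rewrite ltr_pM2l // ltr_pM2r.
  have hp := lt_trans etap hP.
  have : 0 < m * (eta * enorm P) by apply: mulr_gt0 => //; exact: mulr_gt0.
  lra.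
rewrite Ey; apply: (HI _ _ _ Hv).
  rewrite Eyy; apply: le_lt_trans (enormD _ _) _.
  lra.
rewrite (_ : r t - gradf (x t) - Q - - gradf xs = (r t - Dl) - Q); last first.
  by rewrite /Dl; apply/rowP => j; rewrite !mxE; ring.
apply: le_lt_trans (enormBle _ _) _.
apply: le_lt_trans (lerD (enormBle _ _) (lexx _)) _.
have HDl' : enorm Dl <= L1 * del by apply: le_trans HDl _; rewrite ler_wpM2l.
have HQ' : enorm Q <= Mb * eta by apply: le_trans HQ _; rewrite ler_wpM2l // ltW.
have s2 : L1 * del <= c0 by have := mulr_ge0 L10 (ltW delp); have := ltW Mb0; nra.
have c0M : c0 * 8 <= Mb * eta by rewrite c0e ler_wpM2r // ltW.
have : eta * 3 * Mb < eta * 3 * (Mb + 1) by have := etap; nra.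
lra.
Qed.
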